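(* Let $u:(0,\infty)\to\mathbb{R}$ be strictly concave and continuously differentiable, and let $b>0$. Let $\hat u$ be the modified utility of $u$ with budget $b$ (defined in the context). Then (i) $\hat u$ is continuously differentiable on $(0,\infty)$; (ii) $\hat u$ is strictly concave on $(0,\infty)$; (iii) for all $\lambda>0$, $$\arg\max_{x>0}\ \hat u(x)-\lambda x=\max\Big\{0,\ \min\Big\{(u')^{-1}(\lambda),\ \tfrac{b}{\lambda}\Big\}\Big\}.$$
   Context: Modified utility: let $0=\tilde x_0<\tilde x_1<\dots<\tilde x_k<\tilde x_{k+1}=\infty$, where $\tilde x_1,\dots,\tilde x_k$ are the (crossover) solutions $\tilde x>0$ of $u'(\tilde x)=b/\tilde x$. On each interval $(\tilde x_{j-1},\tilde x_j)$ either $u'(x)\le b/x$ throughout or $u'(x)>b/x$ throughout; define $\hat u(x)=u(x)+c_j$ on intervals of the first type and $\hat u(x)=b\log x+d_j$ on intervals of the second type, where the constants $c_j,d_j$ are chosen sequentially so that $\hat u$ is continuous at each crossover point, with $c_1=d_1=0$. *)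

(* Defs.v *)
From Stdlib Require Import Reals Lra ClassicalEpsilon.
From Coquelicot Require Import Coquelicot.
Open Scope R_scope.

Definition strictly_concave_pos (f : R -> R) : Prop :=
  forall x y t, 0 < x -> 0 < y -> x <> y -> 0 < t < 1 ->
    t * f x + (1 - t) * f y < f (t * x + (1 - t) * y).

Definition C1_pos (f : R -> R) : Prop :=
  forall x, 0 < x -> ex_derive f x /\ continuous (Derive f) x.

(* xt 1 < ... < xt k are exactly the crossover points x > 0 with u'(x) = b/x;
   xt 0 = 0 (and x~_{k+1} = +oo is implicit). *)
Definition crossovers (u : R -> R) (b : R) (k : nat) (xt : nat -> R) : Prop :=
  xt 0%nat = 0 /\
  (forall j, (1 <= j <= k)%nat -> xt (j - 1)%nat < xt j) /\
  (forall x, 0 < x -> (Derive u x = b / x <-> exists j, (1 <= j <= k)%nat /\ x = xt j)).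

(* x lies in the open interval (x~_{j-1}, x~_j), with x~_{k+1} = +oo *)
Definition in_piece (k : nat) (xt : nat -> R) (j : nat) (x : R) : Prop :=
  xt (j - 1)%nat < x /\ ((j <= k)%nat -> x < xt j).

Definition modified_utility (u : R -> R) (b : R) (k : nat) (xt : nat -> R)
    (uh : R -> R) : Prop :=
  exists c d : nat -> R,
    c 1%nat = 0 /\ d 1%nat = 0 /\
    (forall j, (1 <= j <= k + 1)%nat ->
       ((forall x, in_piece k xt j x -> Derive u x <= b / x) ->
          forall x, in_piece k xt j x -> uh x = u x + c j) /\
       ((forall x, in_piece k xt j x -> Derive u x > b / x) ->
          forall x, in_piece k xt j x -> uh x = b * ln x + d j)) /\
    (forall j, (1 <= j <= k)%nat -> continuous uh (xt j)).

(* (u')^{-1}(l) as an extended real, with the conventions: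
   the unique y > 0 with u'(y) = l if it exists; 0 if u' < l on (0,oo);
   +oo otherwise (i.e. u' > l on (0,oo)). *)
Definition uprime_inv (u : R -> R) (l : R) : Rbar :=
  match excluded_middle_informative (exists x, 0 < x /\ Derive u x = l) with
  | left _ => Finite (epsilon (inhabits 0) (fun x => 0 < x /\ Derive u x = l))
  | right _ =>
      match excluded_middle_informative (forall x, 0 < x -> Derive u x < l) with
      | left _ => Finite 0
      | right _ => p_infty
      end
  end.

Definition opt_point (u : R -> R) (b l : R) : R :=
  Rmax 0 (real (Rbar_min (uprime_inv u l) (Finite (b / l)))).

(* Main.v *)
From Stdlib Require Import Reals Lra Lia Arith ClassicalEpsilon Classical.
From Coquelicot Require Import Coquelicot.
Require Import Defs.
Open Scope R_scope.

Lemma three_slope f a p c : strictly_concave_pos f -> 0 < a -> a < p -> p < c ->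
  (f p - f a) * (c - p) > (f c - f p) * (p - a).
Proof.
  intros Hf Ha H1 H2.
  set (t := (c - p) / (c - a)).
  assert (Hp : t * a + (1 - t) * c = p) by (unfold t; field; lra).
  assert (Ht : 0 < t < 1).
  { unfold t; split.
    - apply Rdiv_lt_0_compat; lra.
    - apply Rmult_lt_reg_r with (c - a); [lra|]. unfold Rdiv; rewrite Rmult_assoc, Rinv_l; lra. }
  pose proof (Hf a c t Ha ltac:(lra) ltac:(lra) Ht) as H. rewrite Hp in H.
  assert (E : (f p - f a) * (c - p) - (f c - f p) * (p - a) = (c - a) * (f p - (t * f a + (1 - t) * f c))).
  { unfold t; field; lra. }
  assert (0 < (c - a) * (f p - (t * f a + (1 - t) * f c))) by (apply Rmult_lt_0_compat; lra).
  lra.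
Qed.

Lemma tangent f a c l : strictly_concave_pos f -> 0 < a -> 0 < c -> is_derive f a l ->
  f c <= f a + l * (c - a).
Proof.
  intros Hf Ha Hc Hd. apply is_derive_Reals in Hd.
  destruct (Rle_or_lt (f c) (f a + l * (c - a))) as [|Hlt]; auto. exfalso.
  destruct (Rtotal_order a c) as [Hac|[Hac|Hac]].
  - set (s := (f c - f a) / (c - a)).
    assert (Hs : l < s).
    { unfold s. apply Rmult_lt_reg_r with (c - a); [lra|]. unfold Rdiv; rewrite Rmult_assoc, Rinv_l; lra. }
    destruct (Hd (s - l) ltac:(lra)) as [d Hdd].
    set (h := Rmin (d/2) ((c - a)/2)).
    assert (Hh1 : 0 < h) by (unfold h; apply Rmin_pos; destruct d; simpl; lra).
    assert (Hh2 : h < d) by (unfold h; pose proof (Rmin_l (d/2) ((c-a)/2)); destruct d; simpl in *; lra).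
    assert (Hh3 : h < c - a) by (unfold h; pose proof (Rmin_r (d/2) ((c-a)/2)); lra).
    specialize (Hdd h ltac:(lra) ltac:(rewrite Rabs_right; lra)).
    apply Rabs_def2 in Hdd. destruct Hdd as [Hq _].
    pose proof (three_slope f a (a + h) c Hf Ha ltac:(lra) ltac:(lra)) as T.
    set (q := (f (a + h) - f a) / h) in *.
    assert (Eq : f (a + h) - f a = q * h) by (unfold q; field; lra).
    rewrite Eq in T.
    assert (T2 : q * (c - (a + h)) > f c - f (a + h)).
    { apply Rmult_lt_reg_r with h; [lra|]. lra. }
    assert (Es : f c - f a = s * (c - a)) by (unfold s; field; lra).
    assert (q * (c - a) > s * (c - a)) by lra.
    assert (q > s) by (apply Rmult_lt_reg_r with (c - a); lra).
    lra.
  - subst. lra.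
  - set (s := (f a - f c) / (a - c)).
    assert (Hs : s < l).
    { unfold s. apply Rmult_lt_reg_r with (a - c); [lra|]. unfold Rdiv; rewrite Rmult_assoc, Rinv_l; lra. }
    destruct (Hd (l - s) ltac:(lra)) as [d Hdd].
    set (m := Rmin (d/2) ((a - c)/2)).
    assert (Hh1 : 0 < m) by (unfold m; apply Rmin_pos; destruct d; simpl; lra).
    assert (Hh2 : m < d) by (unfold m; pose proof (Rmin_l (d/2) ((a-c)/2)); destruct d; simpl in *; lra).
    assert (Hh3 : m < a - c) by (unfold m; pose proof (Rmin_r (d/2) ((a-c)/2)); lra).
    specialize (Hdd (- m) ltac:(lra) ltac:(rewrite Rabs_left; lra)).
    apply Rabs_def2 in Hdd. destruct Hdd as [_ Hq].
    pose proof (three_slope f c (a + - m) a Hf Hc ltac:(lra) ltac:(lra)) as T.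
    set (q := (f (a + - m) - f a) / - m) in *.
    assert (Eq : f a - f (a + - m) = q * m) by (unfold q; field; lra).
    replace (a - (a + - m)) with m in T by ring.
    rewrite Eq in T.
    assert (T2 : f (a + - m) - f c > q * (a + - m - c)).
    { apply Rmult_lt_reg_r with m; [lra|]. lra. }
    assert (Es : f a - f c = s * (a - c)) by (unfold s; field; lra).
    assert (s * (a - c) > q * (a - c)) by lra.
    assert (s > q) by (apply Rmult_lt_reg_r with (a - c); lra).
    lra.
Qed.

Lemma deriv_strict_decr f : strictly_concave_pos f -> C1_pos f ->
  forall x y, 0 < x -> x < y -> Derive f y < Derive f x.
Proof.
  intros Hf Hc x y Hx Hxy.
  set (m := (x + y) / 2).
  assert (Dx := Derive_correct f x (proj1 (Hc x Hx))).
  assert (Dy := Derive_correct f y (proj1 (Hc y ltac:(lra)))).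
  pose proof (tangent f x m _ Hf Hx ltac:(unfold m; lra) Dx) as T1.
  pose proof (tangent f y m _ Hf ltac:(lra) ltac:(unfold m; lra) Dy) as T2.
  pose proof (Hf x y (1/2) Hx ltac:(lra) ltac:(lra) ltac:(lra)) as M.
  replace (1 / 2 * x + (1 - 1 / 2) * y) with m in M by (unfold m; field).
  assert (Hd : (Derive f x - Derive f y) * (m - x) > 0).
  { replace (m - y) with (- (m - x)) in T2 by (unfold m; field). lra. }
  assert (0 < m - x) by (unfold m; lra).
  destruct (Rle_or_lt (Derive f x) (Derive f y)) as [Hle|]; auto.
  exfalso. assert ((Derive f x - Derive f y) * (m - x) <= 0).
  { apply Rmult_le_0_r; lra. } lra.
Qed.

Lemma concave_from_deriv f h : (forall x, 0 < x -> is_derive f x (h x)) ->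
  (forall x y, 0 < x -> x < y -> h y < h x) -> strictly_concave_pos f.
Proof.
  intros Hd Hh.
  assert (K : forall x y t, 0 < x -> x < y -> 0 < t < 1 ->
     t * f x + (1 - t) * f y < f (t * x + (1 - t) * y)).
  { intros x y t Hx Hxy Ht. set (z := t * x + (1 - t) * y).
    assert (Hz1 : x < z). { unfold z. nra. }
    assert (Hz2 : z < y). { unfold z. nra. }
    destruct (MVT_cor2 f h x z Hz1) as [c1 [E1 C1]].
    { intros c Hc. apply is_derive_Reals, Hd. lra. }
    destruct (MVT_cor2 f h z y Hz2) as [c2 [E2 C2]].
    { intros c Hc. apply is_derive_Reals, Hd. lra. }
    assert (Hlt : h c2 < h c1) by (apply Hh; lra).
    assert (Ez1 : z - x = (1 - t) * (y - x)) by (unfold z; ring).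
    assert (Ez2 : y - z = t * (y - x)) by (unfold z; ring).
    rewrite Ez1 in E1. rewrite Ez2 in E2.
    assert (P : 0 < t * (1 - t) * (y - x)) by (apply Rmult_lt_0_compat; [apply Rmult_lt_0_compat|]; lra).
    assert (t * (f z - f x) - (1 - t) * (f y - f z) = t * (1 - t) * (y - x) * (h c1 - h c2)).
    { rewrite E1, E2. ring. }
    assert (0 < t * (1 - t) * (y - x) * (h c1 - h c2)) by (apply Rmult_lt_0_compat; lra).
    lra. }
  intros x y t Hx Hy Hne Ht.
  destruct (Rtotal_order x y) as [Hl|[He|Hg]].
  - apply K; auto.
  - contradiction.
  - pose proof (K y x (1 - t) Hy Hg ltac:(lra)).
    replace (t * x + (1 - t) * y) with ((1 - t) * y + (1 - (1 - t)) * x) by ring. lra.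
Qed.

Lemma Rmin_formula a c : Rmin a c = (a + c - Rabs (a - c)) / 2.
Proof.
  unfold Rmin; destruct (Rle_dec a c).
  - rewrite Rabs_left1; lra.
  - rewrite Rabs_right; lra.
Qed.

Lemma continuous_Rmin (f g : R -> R) x :
  continuous f x -> continuous g x -> continuous (fun y => Rmin (f y) (g y)) x.
Proof.
  intros Hf Hg.
  apply (continuous_ext (fun y => mult (minus (plus (f y) (g y)) (Rabs (minus (f y) (g y)))) (/2))).
  { intros y. rewrite Rmin_formula. unfold mult, minus, plus, opp; simpl. reflexivity. }
  apply (@continuous_mult R_UniformSpace R_AbsRing); [|apply continuous_const].
  apply (@continuous_minus R_UniformSpace R_AbsRing R_NormedModule); [apply (@continuous_plus R_UniformSpace R_AbsRing R_NormedModule); auto|].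
  apply continuous_Rabs_comp. apply (@continuous_minus R_UniformSpace R_AbsRing R_NormedModule); auto.
Qed.

Lemma left_lim_eq (g f : R -> R) a p :
  a < p -> (forall x, a < x < p -> g x = f x) ->
  continuous g p -> continuous f p -> g p = f p.
Proof.
  intros Hap Heq Hg Hf.
  assert (Hg' : filterlim g (at_left p) (locally (g p))).
  { eapply filterlim_filter_le_1; [|exact Hg]. intros P HP. unfold at_left, within.
    apply filter_imp with (2 := HP). auto. }
  assert (Hf' : filterlim f (at_left p) (locally (f p))).
  { eapply filterlim_filter_le_1; [|exact Hf]. intros P HP. unfold at_left, within.
    apply filter_imp with (2 := HP). auto. }
  assert (Hg2 : filterlim f (at_left p) (locally (g p))).
  { eapply filterlim_ext_loc; [|exact Hg'].
    unfold at_left, within. apply locally_interval with (a := Finite a) (b := Finite (p+1));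
    simpl; try lra. intros y H1 H2 H3. apply Heq; lra. }
  exact (@filterlim_locally_unique R R_AbsRing R_NormedModule (at_left p) _ f _ _ Hg2 Hf').
Qed.

Lemma right_lim_eq (g f : R -> R) p c :
  p < c -> (forall x, p < x < c -> g x = f x) ->
  continuous g p -> continuous f p -> g p = f p.
Proof.
  intros Hap Heq Hg Hf.
  assert (Hg' : filterlim g (at_right p) (locally (g p))).
  { eapply filterlim_filter_le_1; [|exact Hg]. intros P HP. unfold at_right, within.
    apply filter_imp with (2 := HP). auto. }
  assert (Hf' : filterlim f (at_right p) (locally (f p))).
  { eapply filterlim_filter_le_1; [|exact Hf]. intros P HP. unfold at_right, within.
    apply filter_imp with (2 := HP). auto. }
  assert (Hg2 : filterlim f (at_right p) (locally (g p))).
  { eapply filterlim_ext_loc; [|exact Hg'].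
    unfold at_right, within. apply locally_interval with (a := Finite (p-1)) (b := Finite c);
    simpl; try lra. intros y H1 H2 H3. apply Heq; lra. }
  exact (@filterlim_locally_unique R R_AbsRing R_NormedModule (at_right p) _ f _ _ Hg2 Hf').
Qed.

Lemma glue (g fL fR : R -> R) a p c l :
  a < p < c -> (forall x, a < x < p -> g x = fL x) -> (forall x, p < x < c -> g x = fR x) ->
  continuous g p -> is_derive fL p l -> is_derive fR p l -> is_derive g p l.
Proof.
  intros Hp HL HR Hc DL DR.
  assert (EL : g p = fL p).
  { apply (left_lim_eq g fL a p); [lra | exact HL | exact Hc | apply (@ex_derive_continuous R_AbsRing R_NormedModule fL p); exists l; exact DL]. }
  assert (ER : g p = fR p).
  { apply (right_lim_eq g fR p c); [lra | exact HR | exact Hc | apply (@ex_derive_continuous R_AbsRing R_NormedModule fR p); exists l; exact DR]. }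
  apply is_derive_Reals. apply is_derive_Reals in DL. apply is_derive_Reals in DR.
  intros eps Heps.
  destruct (DL eps Heps) as [dL HdL]. destruct (DR eps Heps) as [dR HdR].
  assert (Hd : 0 < Rmin (Rmin dL dR) (Rmin (p - a) (c - p))).
  { destruct dL, dR; simpl. repeat apply Rmin_pos; lra. }
  exists (mkposreal _ Hd). simpl. intros h Hh0 Hh.
  pose proof (Rmin_l (Rmin dL dR) (Rmin (p - a) (c - p))).
  pose proof (Rmin_r (Rmin dL dR) (Rmin (p - a) (c - p))).
  pose proof (Rmin_l dL dR). pose proof (Rmin_r dL dR).
  pose proof (Rmin_l (p - a) (c - p)). pose proof (Rmin_r (p - a) (c - p)).
  destruct (Rlt_or_le h 0) as [Hn|Hn].
  - rewrite HL by (apply Rabs_def2 in Hh; lra). rewrite EL.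
    apply HdL; auto. lra.
  - rewrite HR by (apply Rabs_def2 in Hh; lra). rewrite ER.
    apply HdR; auto. lra.
Qed.

Lemma ivt_pos F a c : (forall x, 0 < x -> continuity_pt F x) -> 0 < a -> 0 < c ->
  F a < 0 -> 0 < F c -> exists z, Rmin a c <= z <= Rmax a c /\ F z = 0.
Proof.
  intros HF Ha Hc H1 H2.
  destruct (Rtotal_order a c) as [Hl|[He|Hg]].
  - destruct (Ranalysis5.IVT_interv F a c) as [z [Hz Fz]]; auto.
    { intros y Hy; apply HF; lra. }
    exists z. rewrite Rmin_left, Rmax_right by lra. auto.
  - subst; lra.
  - destruct (Ranalysis5.IVT_interv (fun x => - F x) c a) as [z [Hz Fz]]; auto; try lra.
    { intros y Hy. apply continuity_pt_opp. apply HF; lra. }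
    exists z. rewrite Rmin_right, Rmax_left by lra. split; auto. lra.
Qed.

Lemma xt_lt u b k xt : crossovers u b k xt ->
  forall j i, (i < j)%nat -> (j <= k)%nat -> xt i < xt j.
Proof.
  intros [H0 [Hinc _]]. induction j as [|j IH]; intros i Hij Hjk; [lia|].
  assert (Hs : xt j < xt (S j)).
  { pose proof (Hinc (S j) ltac:(lia)) as H. replace (S j - 1)%nat with j in H by lia. exact H. }
  destruct (Nat.eq_dec i j) as [->|Hne]; auto.
  apply Rlt_trans with (xt j); auto. apply IH; lia.
Qed.

Lemma xt_le u b k xt : crossovers u b k xt ->
  forall j i, (i <= j)%nat -> (j <= k)%nat -> xt i <= xt j.
Proof.
  intros Hc j i Hij Hjk. destruct (Nat.eq_dec i j) as [->|]; [lra|].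
  left. eapply xt_lt; eauto. lia.
Qed.

Lemma piece_pos u b k xt j x : crossovers u b k xt -> (1 <= j <= k + 1)%nat ->
  in_piece k xt j x -> 0 < x.
Proof.
  intros Hc Hj [H1 H2]. pose proof (xt_le u b k xt Hc (j - 1) 0 ltac:(lia) ltac:(lia)).
  destruct Hc as [H0 _]. lra.
Qed.

Lemma piece_not_cross u b k xt j x : crossovers u b k xt -> (1 <= j <= k + 1)%nat ->
  in_piece k xt j x -> Derive u x <> b / x.
Proof.
  intros Hc Hj Hp E. pose proof (piece_pos u b k xt j x Hc Hj Hp) as Hx.
  destruct Hp as [H1 H2].
  destruct Hc as [H0 [Hinc Hcr]] eqn:Hce.
  apply (Hcr x Hx) in E. destruct E as [i [Hi ->]].
  destruct (le_lt_dec i (j - 1)) as [Hle|Hlt].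
  - pose proof (xt_le u b k xt Hc (j - 1) i Hle ltac:(lia)). lra.
  - pose proof (xt_le u b k xt Hc i j ltac:(lia) ltac:(lia)).
    specialize (H2 ltac:(lia)). lra.
Qed.

Lemma cont_P u b x : C1_pos u -> 0 < x -> continuity_pt (fun y => Derive u y - b / y) x.
Proof.
  intros Hu Hx. apply continuity_pt_minus.
  - apply continuity_pt_filterlim. apply (Hu x Hx).
  - apply continuity_pt_filterlim. apply (@ex_derive_continuous R_AbsRing R_NormedModule (fun y => b / y) x). auto_derive. lra.
Qed.

Lemma dichotomy u b k xt j : C1_pos u -> crossovers u b k xt -> (1 <= j <= k + 1)%nat ->
  (forall x, in_piece k xt j x -> Derive u x <= b / x) \/
  (forall x, in_piece k xt j x -> Derive u x > b / x).
Proof.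
  intros Hu Hc Hj.
  destruct (classic (forall x, in_piece k xt j x -> Derive u x <= b / x)) as [|Hn]; [left; auto|right].
  apply not_all_ex_not in Hn. destruct Hn as [y1 Hy1].
  apply imply_to_and in Hy1. destruct Hy1 as [Hp1 Hn1]. apply Rnot_le_lt in Hn1.
  intros y2 Hp2. destruct (Rlt_or_le (b / y2) (Derive u y2)) as [|Hle]; [lra|exfalso].
  assert (Hlt : Derive u y2 < b / y2).
  { destruct Hle; auto. exfalso. eapply piece_not_cross; eauto. }
  destruct (ivt_pos (fun y => Derive u y - b / y) y2 y1) as [z [Hz Fz]].
  - intros; apply cont_P; auto.
  - eapply piece_pos; eauto.
  - eapply piece_pos; eauto.
  - lra.
  - lra.
  - assert (Hpz : in_piece k xt j z).
    { destruct Hp1 as [A1 B1]; destruct Hp2 as [A2 B2]. split.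
      - unfold Rmin in Hz; destruct (Rle_dec y2 y1); lra.
      - intros Hjk. specialize (B1 Hjk); specialize (B2 Hjk).
        unfold Rmax in Hz; destruct (Rle_dec y2 y1); lra. }
    apply (piece_not_cross u b k xt j z Hc Hj Hpz). lra.
Qed.

Definition hfun (u : R -> R) (b : R) (x : R) := Rmin (Derive u x) (b / x).

Lemma piece_fun u b k xt uh j : C1_pos u -> crossovers u b k xt ->
  modified_utility u b k xt uh -> (1 <= j <= k + 1)%nat ->
  exists f, (forall x, in_piece k xt j x -> uh x = f x) /\
    (forall x, 0 < x -> (in_piece k xt j x \/ Derive u x = b / x) -> is_derive f x (hfun u b x)).
Proof.
  intros Hu Hc [c [d [_ [_ [Hm _]]]]] Hj.
  destruct (Hm j Hj) as [T1 T2].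
  destruct (dichotomy u b k xt j Hu Hc Hj) as [D|D].
  - exists (fun x => u x + c j). split; [apply T1; auto|].
    intros x Hx Hor.
    assert (E : hfun u b x = Derive u x).
    { unfold hfun. apply Rmin_left. destruct Hor as [Hp|E]; [apply D; auto|lra]. }
    rewrite E. auto_derive. { apply (Hu x Hx). } rewrite Rmult_1_l; reflexivity.
  - exists (fun x => b * ln x + d j). split; [apply T2; auto|].
    intros x Hx Hor.
    assert (E : hfun u b x = b / x).
    { unfold hfun. apply Rmin_right. destruct Hor as [Hp|E]; [left; apply D; auto|lra]. }
    rewrite E. auto_derive. { lra. } field. lra.
Qed.

Lemma locate u b k xt x : crossovers u b k xt -> 0 < x ->
  (exists j, (1 <= j <= k + 1)%nat /\ in_piece k xt j x) \/
  (exists j, (1 <= j <= k)%nat /\ x = xt j).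
Proof.
  intros Hc Hx.
  assert (L : forall m, (m <= k)%nat -> exists j, (j <= m)%nat /\ xt j < x /\ ((j < m)%nat -> x <= xt (S j))).
  { induction m as [|m IH]; intros Hm.
    - exists 0%nat. destruct Hc as [H0 _]. rewrite H0. repeat split; auto; lia.
    - destruct (IH ltac:(lia)) as [j [Hj1 [Hj2 Hj3]]].
      destruct (Nat.eq_dec j m) as [->|Hne].
      + destruct (Rlt_or_le (xt (S m)) x).
        * exists (S m). repeat split; auto; lia.
        * exists m. repeat split; auto.
      + exists j. repeat split; auto. intros; apply Hj3; lia. }
  destruct (L k (le_n k)) as [j [Hj1 [Hj2 Hj3]]].
  destruct (Nat.eq_dec j k) as [->|Hne].
  - left. exists (k + 1)%nat. split; [lia|]. split.
    + replace (k + 1 - 1)%nat with k by lia. auto.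
    + intros; lia.
  - specialize (Hj3 ltac:(lia)). destruct Hj3 as [Hlt|Heq].
    + left. exists (S j). split; [lia|]. split.
      * replace (S j - 1)%nat with j by lia. auto.
      * intros; auto.
    + right. exists (S j). split; [lia|auto].
Qed.

Lemma uh_deriv u b k xt uh : C1_pos u -> crossovers u b k xt ->
  modified_utility u b k xt uh -> forall x, 0 < x -> is_derive uh x (hfun u b x).
Proof.
  intros Hu Hc Hm x Hx.
  destruct (locate u b k xt x Hc Hx) as [[j [Hj Hp]]|[j [Hj ->]]].
  - destruct (piece_fun u b k xt uh j Hu Hc Hm Hj) as [f [Hf Df]].
    apply (is_derive_ext_loc f uh). 2: apply Df; auto.
    destruct Hp as [H1 H2].
    destruct (le_lt_dec j k) as [Hjk|Hjk].
    + apply locally_interval with (a := Finite (xt (j - 1)%nat)) (b := Finite (xt j)); simpl; auto.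
      intros y Hy1 Hy2. symmetry. apply Hf. split; auto.
    + apply locally_interval with (a := Finite (xt (j - 1)%nat)) (b := p_infty); simpl; auto.
      intros y Hy1 Hy2. symmetry. apply Hf. split; auto. intros; lia.
  - assert (Hcr : Derive u (xt j) = b / xt j).
    { destruct Hc as [_ [_ Hcr]]. apply Hcr; auto. exists j; auto. }
    destruct (piece_fun u b k xt uh j Hu Hc Hm ltac:(lia)) as [fL [HfL DfL]].
    destruct (piece_fun u b k xt uh (S j) Hu Hc Hm ltac:(lia)) as [fR [HfR DfR]].
    assert (Hcont : continuous uh (xt j)).
    { destruct Hm as [c [d [_ [_ [_ Hct]]]]]. apply Hct; auto. }
    set (cc := if le_lt_dec (S j) k then xt (S j) else xt j + 1).
    assert (Hcc : xt j < cc).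
    { unfold cc; destruct (le_lt_dec (S j) k); [eapply xt_lt; eauto|lra]. }
    assert (Ha : xt (j - 1)%nat < xt j) by (eapply xt_lt; eauto; lia).
    apply (glue uh fL fR (xt (j - 1)%nat) (xt j) cc); auto.
    + intros y Hy. apply HfL. split; [lra|]. intros; lra.
    + intros y Hy. apply HfR. split.
      * replace (S j - 1)%nat with j by lia. lra.
      * intros Hk. unfold cc in Hy. destruct (le_lt_dec (S j) k); [lra|lia].
Qed.

Lemma Rmin_strict a1 a2 c1 c2 : a2 < a1 -> c2 < c1 -> Rmin a2 c2 < Rmin a1 c1.
Proof. intros; unfold Rmin; destruct (Rle_dec a2 c2), (Rle_dec a1 c1); lra. Qed.

Lemma hfun_decr u b : strictly_concave_pos u -> C1_pos u -> 0 < b ->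
  forall x y, 0 < x -> x < y -> hfun u b y < hfun u b x.
Proof.
  intros Hs Hu Hb x y Hx Hxy. unfold hfun. apply Rmin_strict.
  - apply deriv_strict_decr; auto.
  - unfold Rdiv. apply Rmult_lt_compat_l; auto. apply Rinv_lt_contravar; auto.
    apply Rmult_lt_0_compat; lra.
Qed.

Lemma opt_char u b l : strictly_concave_pos u -> C1_pos u -> 0 < b -> 0 < l ->
  (0 < opt_point u b l /\ hfun u b (opt_point u b l) = l) \/
  (opt_point u b l = 0 /\ forall x, 0 < x -> hfun u b x < l).
Proof.
  intros Hs Hu Hb Hl. unfold opt_point, uprime_inv.
  assert (Hbl : 0 < b / l) by (apply Rdiv_lt_0_compat; auto).
  destruct (excluded_middle_informative (exists x, 0 < x /\ Derive u x = l)) as [Ex|NEx].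
  - destruct (epsilon_spec (inhabits 0) (fun x => 0 < x /\ Derive u x = l) Ex) as [He0 He].
    set (e := epsilon (inhabits 0) (fun x => 0 < x /\ Derive u x = l)) in *.
    simpl. left.
    rewrite Rmax_right by (apply Rlt_le, Rmin_pos; auto).
    split; [apply Rmin_pos; auto|].
    unfold Rmin. destruct (Rle_dec e (b / l)) as [Hle|Hgt].
    + unfold hfun. rewrite He. apply Rmin_left.
      apply Rmult_le_reg_r with e; auto. unfold Rdiv. rewrite Rmult_assoc, Rinv_l by lra.
      apply Rmult_le_reg_r with (/ l). { apply Rinv_0_lt_compat; auto. }
      rewrite Rmult_1_r. replace (l * e * / l) with e by (field; lra). exact Hle.
    + unfold hfun. replace (b / (b / l)) with l by (field; lra). apply Rmin_right.
      left. apply Rnot_le_lt in Hgt. assert (Derive u e < Derive u (b / l)) by (apply deriv_strict_decr; auto). lra.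
  - destruct (excluded_middle_informative (forall x, 0 < x -> Derive u x < l)) as [All|NAll].
    + simpl. right. split.
      * rewrite Rmin_left by lra. apply Rmax_left; lra.
      * intros x Hx. unfold hfun. pose proof (Rmin_l (Derive u x) (b / x)). pose proof (All x Hx). lra.
    + simpl. left. rewrite Rmax_right by lra. split; auto.
      assert (Hgt : l < Derive u (b / l)).
      { destruct (Rlt_or_le l (Derive u (b / l))) as [|Hle]; auto. exfalso.
        destruct Hle as [Hlt|Heq]; [|apply NEx; exists (b / l); auto].
        apply not_all_ex_not in NAll. destruct NAll as [x0 Hx0].
        apply imply_to_and in Hx0. destruct Hx0 as [Hx0 Hn]. apply Rnot_lt_le in Hn.
        destruct Hn as [Hn|Hn]; [|apply NEx; exists x0; auto].
        destruct (ivt_pos (fun y => Derive u y - l) (b / l) x0) as [z [Hz Fz]]; auto; try lra.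
        { intros y Hy. apply continuity_pt_minus. apply continuity_pt_filterlim, (Hu y Hy).
          apply continuity_pt_const. intros ? ?; reflexivity. }
        apply NEx. exists z. split; [|lra].
        unfold Rmin in Hz. destruct (Rle_dec (b / l) x0); lra. }
      unfold hfun. replace (b / (b / l)) with l by (field; lra). apply Rmin_right. lra.
Qed.

Theorem lemma2 (u : R -> R) (b : R) (k : nat) (xt : nat -> R) (uh : R -> R) :
  strictly_concave_pos u -> C1_pos u -> 0 < b ->
  crossovers u b k xt -> modified_utility u b k xt uh ->
  C1_pos uh /\
  strictly_concave_pos uh /\
  (forall l, 0 < l ->
     let xs := opt_point u b l in
     (0 < xs -> forall x, 0 < x -> x <> xs -> uh x - l * x < uh xs - l * xs) /\
     (xs = 0 -> forall x y, 0 < x -> x < y -> uh y - l * y < uh x - l * x)).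
Proof.
  intros Hs Hu Hb Hc Hm.
  assert (D := uh_deriv u b k xt uh Hu Hc Hm).
  assert (Dec := hfun_decr u b Hs Hu Hb).
  split; [|split].
  - intros x Hx. split; [eexists; apply D; auto|].
    apply (continuous_ext_loc _ (hfun u b)).
    { apply locally_interval with (a := Finite 0) (b := p_infty); simpl; auto.
      intros y Hy _. symmetry. apply is_derive_unique, D; auto. }
    apply continuous_Rmin.
    + apply (Hu x Hx).
    + apply (@ex_derive_continuous R_AbsRing R_NormedModule (fun y => b / y) x). auto_derive. lra.
  - apply (concave_from_deriv uh (hfun u b)); auto.
  - intros l Hl xs.
    assert (G : forall x y, 0 < x -> x < y -> exists c, x < c < y /\
               (uh y - l * y) - (uh x - l * x) = (hfun u b c - l) * (y - x)).
    { intros x y Hx Hxy.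
      destruct (MVT_cor2 (fun z => uh z - l * z) (fun z => hfun u b z - l) x y Hxy) as [c [E C]].
      { intros c Hc0. apply is_derive_Reals.
        apply (is_derive_minus uh (fun y => l * y) c _ l (D c ltac:(lra))).
        auto_derive; auto; ring. }
      exists c; split; auto. }
    destruct (opt_char u b l Hs Hu Hb Hl) as [[Hxs Hh]|[Hxs Hh]]; fold xs in Hxs, Hh.
    + split; [|intros; lra].
      intros _ x Hx Hne. destruct (Rtotal_order x xs) as [Hlt|[Heq|Hgt]].
      * destruct (G x xs Hx Hlt) as [c [Cc E]].
        assert (hfun u b xs < hfun u b c) by (apply Dec; lra).
        assert (0 < (hfun u b c - l) * (xs - x)) by (apply Rmult_lt_0_compat; lra). lra.
      * contradiction.
      * destruct (G xs x Hxs Hgt) as [c [Cc E]].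
        assert (hfun u b c < hfun u b xs) by (apply Dec; lra).
        assert (0 < (l - hfun u b c) * (x - xs)) by (apply Rmult_lt_0_compat; lra). lra.
    + split; [intros; lra|].
      intros _ x y Hx Hxy. destruct (G x y Hx Hxy) as [c [Cc E]].
      assert (hfun u b c < l) by (apply Hh; lra).
      assert (0 < (l - hfun u b c) * (y - x)) by (apply Rmult_lt_0_compat; lra). lra.
Qed.
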